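(* Let $p\equiv1\pmod5$ be prime and let $\psi$ be a character of order $5$ of $\mathbb{F}_p^*$. If $a,b,c\in\mathbb{Z}$ satisfy $a+c\not\equiv0\pmod5$ and $b+c\not\equiv0\pmod5$, then \[ \sum_{\chi}g(\bar\chi\psi^a)\,g(\bar\chi\psi^b)\,g(\chi\psi^c)\,g(\chi\bar\psi^{\,a+b+c})=-p(p-1), \] where the sum runs over all multiplicative characters $\chi$ of $\mathbb{F}_p^*$.
   Context: Multiplicative characters of $\mathbb{F}_p^*$ are regarded as maps $\mathbb{F}_p^*\to\mathbb{Z}_p^*$ (with values in the $(p-1)$-th roots of unity) and extended to $\mathbb{F}_p$ by $\chi(0):=0$, including for the trivial character; $\bar\chi$ denotes the inverse character. Fix a primitive $p$-th root of unity $\zeta_p\in\overline{\mathbb{Q}_p}$ and let $\theta(x):=\zeta_p^{x}$ for $x\in\mathbb{F}_p$. The Gauss sum of a character $\chi$ is $g(\chi):=\sum_{x\in\mathbb{F}_p}\chi(x)\theta(x)$. *)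

(* Defs.v *)
From HB Require Import structures.
From mathcomp Require Import all_boot all_order all_algebra all_field.
Set Implicit Arguments. Unset Strict Implicit. Unset Printing Implicit Defensive.
Import Order.TTheory GRing.Theory Num.Theory.
Local Open Scope ring_scope.

(* A multiplicative character of F_p^*, extended to F_p by chi(0) := 0. *)
Definition is_mulchar (p : nat) (chi : {ffun 'F_p -> algC}) : Prop :=
  [/\ chi 0 = 0, chi 1 = 1 & forall x y : 'F_p, chi (x * y) = chi x * chi y].

Definition trivchar (p : nat) : {ffun 'F_p -> algC} :=
  [ffun x => if x == 0 then 0 else 1].

Definition charpow (p : nat) (chi : {ffun 'F_p -> algC}) (a : int)
  : {ffun 'F_p -> algC} :=
  [ffun x => if x == 0 then 0 else chi x ^ a].

Definition charinv (p : nat) (chi : {ffun 'F_p -> algC}) := charpow chi (-1).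

Definition charmul (p : nat) (chi1 chi2 : {ffun 'F_p -> algC})
  : {ffun 'F_p -> algC} := [ffun x => chi1 x * chi2 x].

Definition char_order (p : nat) (chi : {ffun 'F_p -> algC}) (n : nat) : Prop :=
  charpow chi n%:Z = trivchar p /\
  forall k : nat, (0 < k < n)%N -> charpow chi k%:Z <> trivchar p.

Definition gauss (p : nat) (zeta : algC) (chi : {ffun 'F_p -> algC}) : algC :=
  \sum_(x : 'F_p) chi x * zeta ^+ (x : nat).

(* Main.v *)
Require Import Defs.
From HB Require Import structures.
From mathcomp Require Import all_boot all_order all_algebra all_field.
From mathcomp Require Import cyclic.
From mathcomp Require Import ring.
Import Order.TTheory GRing.Theory Num.Theory.
Local Open Scope ring_scope.

Lemma mc_nz (p : nat) (chi : {ffun 'F_p -> algC}) (x : 'F_p) :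
  is_mulchar chi -> x != 0 -> chi x != 0.
Proof.
move=> [c0 c1 cM] xnz; apply/eqP => cx.
have := cM x x^-1; rewrite mulfV // c1 cx mul0r => /eqP.
by rewrite oner_eq0.
Qed.

Lemma mc_inv (p : nat) (chi : {ffun 'F_p -> algC}) (x : 'F_p) :
  is_mulchar chi -> x != 0 -> chi (x^-1) = (chi x)^-1.
Proof.
move=> hc xnz; have [c0 c1 cM] := hc.
have := cM x x^-1; rewrite mulfV // c1 => h.
apply: (mulfI (mc_nz _ _ _ hc xnz)); by rewrite -h mulfV ?mc_nz.
Qed.

Lemma charmul_mc (p : nat) (c1 c2 : {ffun 'F_p -> algC}) :
  is_mulchar c1 -> is_mulchar c2 -> is_mulchar (charmul c1 c2).
Proof.
move=> [a0 a1 aM] [b0 b1 bM]; split; rewrite /charmul ?ffunE ?a0 ?mul0r ?a1 ?b1 ?mul1r //.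
by move=> x y; rewrite !ffunE aM bM mulrACA.
Qed.

Lemma trivchar_mc (p : nat) : is_mulchar (trivchar p).
Proof.
split; rewrite /trivchar ?ffunE ?eqxx ?oner_eq0 //.
by move=> x y; rewrite !ffunE mulf_eq0; case: (x == 0); case: (y == 0); rewrite ?mulr1 ?mulr0 ?mul0r.
Qed.

Lemma mult_sum0 (p : nat) (f : 'F_p -> algC) (u : 'F_p) :
  (forall x y, f (x * y) = f x * f y) -> u != 0 -> f u != 1 ->
  \sum_x f x = 0.
Proof.
move=> fM unz fu1.
have : \sum_x f x = f u * \sum_x f x.
  rewrite [LHS](reindex_inj (mulfI unz)) mulr_sumr.
  by apply: eq_bigr => x _; rewrite fM.
move/eqP; rewrite -subr_eq0 -{1}(mul1r (\sum_x f x)) -mulrBl mulf_eq0 subr_eq0 eq_sym.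
by rewrite (negPf fu1) => /eqP.
Qed.

Lemma shift_perm (p : nat) (s : seq {ffun 'F_p -> algC}) (c0 : {ffun 'F_p -> algC}) :
  uniq s -> (forall chi, chi \in s <-> is_mulchar chi) -> is_mulchar c0 ->
  perm_eq (map (charmul c0) s) s.
Proof.
move=> us hs hc0.
have inj : {in s &, injective (charmul c0)}.
  move=> c1 c2 /hs h1 /hs h2 /ffunP e; apply/ffunP => x.
  have := e x; rewrite !ffunE.
  have [->|xnz] := eqVneq x 0; first by case: h1 => -> _ _; case: h2 => -> _ _.
  by apply: mulfI; apply: mc_nz.
have um : uniq (map (charmul c0) s) by rewrite map_inj_in_uniq.
have sub : {subset map (charmul c0) s <= s}.
  by move=> c /mapP [c' /hs hc' ->]; apply/hs/charmul_mc.
have sz : (size s <= size (map (charmul c0) s))%N by rewrite size_map.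
have [_ e] := uniq_min_size um sub sz.
by apply: uniq_perm.
Qed.
Lemma Fp_unity (p : nat) (x : 'F_p) : prime p -> x != 0 -> x ^+ p.-1 = 1.
Proof.
move=> pp xnz; have := expf_card x; rewrite card_Fp //.
have hp : (p.-1).+1 = p by rewrite prednK ?prime_gt0.
have e : x ^+ p = x ^+ p.-1 * x by rewrite -exprSr hp.
rewrite e => h.
by apply: (mulIf xnz); rewrite h mul1r.
Qed.

Lemma faithful_exists (p : nat) : prime p ->
  exists c0 : {ffun 'F_p -> algC}, is_mulchar c0 /\
    forall x, x != 0 -> x != 1 -> c0 x != 1.
Proof.
move=> pp; have n_gt0 : (0 < p.-1)%N by rewrite -ltnS prednK ?prime_gt0 ?prime_gt1.
have : has p.-1.-primitive_root (enum (predC1 (0 : 'F_p))).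
  apply: has_prim_root => //.
  - by apply/allP => x; rewrite mem_enum /= => xnz; rewrite unity_rootE (Fp_unity _ _ pp xnz).
  - exact: enum_uniq.
  - by rewrite -cardE cardC1 card_Fp.
case/hasP => g _ gprim.
have [w wprim] := C_prim_root_exists n_gt0.
pose dl (x : 'F_p) : nat := oapp (@nat_of_ord _) 0%N [pick i : 'I_(p.-1) | g ^+ i == x].
have dlE x : x != 0 -> g ^+ dl x = x.
  move=> xnz; rewrite /dl; case: pickP => [i /eqP //|].
  have [i ->] := prim_rootP gprim (Fp_unity _ _ pp xnz).
  by move=> /(_ i); rewrite eqxx.
pose c0 := [ffun x : 'F_p => if x == 0 then 0 else w ^+ dl x].
have c0_1 x : x != 0 -> (c0 x == 1) = (x == 1).
  move=> xnz; rewrite ffunE (negPf xnz) -(expr0 w) (eq_prim_root_expr wprim).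
  rewrite -(eq_prim_root_expr gprim) expr0 dlE //.
exists c0; split; last by move=> x xnz x1; rewrite c0_1.
split.
- by rewrite ffunE eqxx.
- by apply/eqP; rewrite c0_1 ?oner_eq0 ?eqxx.
- move=> x y; rewrite !ffunE mulf_eq0.
  have [->|xnz] := eqVneq x 0; first by rewrite !mul0r.
  have [->|ynz] := eqVneq y 0; first by rewrite orbT !mulr0.
  rewrite /= -exprD; apply/eqP; rewrite (eq_prim_root_expr wprim) -(eq_prim_root_expr gprim).
  by rewrite exprD !dlE // mulf_neq0.
Qed.
Lemma theta_add (p : nat) (zeta : algC) (x y : 'F_p) : prime p -> p.-primitive_root zeta ->
  zeta ^+ ((x + y)%R : 'F_p) = zeta ^+ x * zeta ^+ y.
Proof.
move=> pp zp; rewrite -exprD -[RHS](prim_expr_mod zp).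
have -> : x + y = ((x : nat) + y)%:R :> 'F_p by rewrite natrD !natr_Zp.
by rewrite (val_Fp_nat pp).
Qed.

Lemma theta_sum (p : nat) (zeta : algC) (k : 'F_p) : prime p -> p.-primitive_root zeta ->
  \sum_(z : 'F_p) zeta ^+ ((z * k)%R : 'F_p) = if k == 0 then p%:R else 0.
Proof.
move=> pp zp; have [->|knz] := eqVneq k 0.
  under eq_bigr do rewrite mulr0 expr0.
  by rewrite sumr_const card_Fp.
rewrite [LHS](reindex_inj (mulIf (invr_neq0 knz))).
under eq_bigr do rewrite mulfVK //.
have h1 : zeta ^+ (1%R : 'F_p) != 1.
  have -> : ((1%R : 'F_p) : nat) = 1%N by rewrite -[1]/(1%:R) val_Fp_nat // modn_small ?prime_gt1.
  by rewrite -(expr0 zeta) (eq_prim_root_expr zp) modn_small ?prime_gt1 // mod0n.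
have : \sum_(z : 'F_p) zeta ^+ z = zeta ^+ (1%R : 'F_p) * \sum_(z : 'F_p) zeta ^+ z.
  rewrite [LHS](reindex_inj (addrI 1)) mulr_sumr.
  by apply: eq_bigr => z _; rewrite theta_add.
move/eqP; rewrite -subr_eq0 -{1}(mul1r (\sum_z _)) -mulrBl mulf_eq0 subr_eq0 eq_sym.
by rewrite (negPf h1) => /eqP.
Qed.

Lemma char_sum (p : nat) (s : seq {ffun 'F_p -> algC}) (v : 'F_p) :
  prime p -> uniq s -> (forall chi, chi \in s <-> is_mulchar chi) -> v != 0 ->
  \sum_(chi <- s) chi v = if v == 1 then (size s)%:R else 0.
Proof.
move=> pp us hs vnz; have [->|v1] := eqVneq v 1.
  rewrite big_seq (eq_bigr (fun _ => 1)) -?big_seq.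
    by rewrite big_const_seq count_predT; elim: (size s) => //= n ->; rewrite -mulrS.
  by move=> c /hs [].
have [c0 [hc0 fc0]] := faithful_exists _ pp.
have : \sum_(chi <- s) chi v = c0 v * \sum_(chi <- s) chi v.
  rewrite -[LHS](perm_big _ (shift_perm _ _ _ us hs hc0)) big_map mulr_sumr.
  by apply: eq_bigr => c _; rewrite ffunE.
move/eqP; rewrite -subr_eq0 -{1}(mul1r (\sum_(chi <- s) _)) -mulrBl mulf_eq0 subr_eq0 eq_sym.
by rewrite (negPf (fc0 v vnz v1)) => /eqP.
Qed.

Lemma size_chars (p : nat) (s : seq {ffun 'F_p -> algC}) :
  prime p -> uniq s -> (forall chi, chi \in s <-> is_mulchar chi) ->
  (size s)%:R = (p.-1)%:R :> algC.
Proof.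
move=> pp us hs.
have e1 : \sum_(v : 'F_p) \sum_(chi <- s) chi v = (size s)%:R.
  rewrite (bigD1 1) //= char_sum ?oner_eq0 // eqxx big1 ?addr0 // => v v1.
  have [->|vnz] := eqVneq v 0.
    by rewrite big_seq big1 // => c /hs [].
  by rewrite char_sum // (negPf v1).
rewrite -e1 exchange_big /=.
have triv_in : trivchar p \in s by apply/hs/trivchar_mc.
rewrite (bigD1_seq _ triv_in us) /= [X in _ + X]big1_seq ?addr0.
  rewrite (bigD1 0) //= ffunE eqxx add0r.
  rewrite (eq_bigr (fun _ => 1)) => [|v vnz]; last by rewrite ffunE (negPf vnz).
  by rewrite sumr_const cardC1 card_Fp.
move=> c /andP [ct cs].
have hc := (iffLR (hs c) cs).
have [u /andP [unz cu]] : exists u, (u != 0) && (c u != 1).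
  apply/existsP; apply: contraR ct => /existsPn h; apply/eqP/ffunP => x.
  rewrite ffunE; case: eqP => [->|/eqP xnz]; first by case: hc.
  by move: (h x); rewrite xnz /= negbK => /eqP.
by apply: (mult_sum0 _ _ u) => //; case: hc.
Qed.


Lemma cp0 (p : nat) (psi : {ffun 'F_p -> algC}) (k : int) : charpow psi k 0 = 0.
Proof. by rewrite ffunE eqxx. Qed.

Lemma cpE (p : nat) (psi : {ffun 'F_p -> algC}) (k : int) (x : 'F_p) :
  x != 0 -> charpow psi k x = psi x ^ k.
Proof. by move=> xnz; rewrite ffunE (negPf xnz). Qed.

Lemma cpM (p : nat) (psi : {ffun 'F_p -> algC}) (k : int) (x y : 'F_p) :
  is_mulchar psi -> charpow psi k (x * y) = charpow psi k x * charpow psi k y.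
Proof.
move=> [_ _ pM].
have [->|xnz] := eqVneq x 0; first by rewrite mul0r cp0 mul0r.
have [->|ynz] := eqVneq y 0; first by rewrite mulr0 cp0 mulr0.
by rewrite !cpE ?mulf_neq0 // pM expfzMl.
Qed.

Lemma psi_unit (p : nat) (psi : {ffun 'F_p -> algC}) (x : 'F_p) :
  is_mulchar psi -> x != 0 -> psi x \is a GRing.unit.
Proof. by move=> h xnz; rewrite unitfE mc_nz. Qed.

Lemma psi5 (p : nat) (psi : {ffun 'F_p -> algC}) (x : 'F_p) :
  char_order psi 5 -> x != 0 -> psi x ^+ 5 = 1.
Proof.
move=> [h _] xnz; have := congr1 (fun f : {ffun 'F_p -> algC} => f x) h.
by rewrite /= !ffunE (negPf xnz).
Qed.

Lemma psim1 (p : nat) (psi : {ffun 'F_p -> algC}) :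
  prime p -> is_mulchar psi -> char_order psi 5 -> psi (-1) = 1.
Proof.
move=> pp hp ho; have m1nz : (-1 : 'F_p) != 0 by rewrite oppr_eq0 oner_eq0.
have h5 := psi5 _ _ _ ho m1nz.
have h2 : psi (-1) ^+ 2 = 1 by case: hp => _ h1 hM; rewrite expr2 -hM mulrNN mulr1 h1.
by rewrite -h5 -[5%N]/(1 + 2 * 2)%N exprD exprM h2 expr1n mulr1 expr1.
Qed.

Lemma psi_nontriv (p : nat) (psi : {ffun 'F_p -> algC}) (m : int) :
  is_mulchar psi -> char_order psi 5 -> ~~ (5 %| m)%Z ->
  exists2 u, u != 0 & psi u ^ m != 1.
Proof.
move=> hp ho ndv.
set r := (m %% 5)%Z.
have r0 : 0 <= r by rewrite modz_ge0.
have r5 : r < 5 by rewrite ltz_pmod.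
have rnz : r != 0 by apply: contra ndv => /eqP h; apply/dvdz_mod0P.
set k := `|r|%N.
have kr : k%:Z = r by rewrite /k gez0_abs.
have k0 : (0 < k < 5)%N.
  by apply/andP; split; rewrite -ltz_nat kr // lt_def rnz.
have [_ hne] := ho.
have [u unz hu] : exists2 u, u != 0 & psi u ^ k != 1.
  apply/exists_inP; apply: (contra_notT _ (hne k k0)) => /exists_inPn hall.
  apply/ffunP => x; rewrite !ffunE; case: eqP => // /eqP xnz.
  by move/negbNE/eqP: (hall x xnz).
exists u => //.
have pu := psi_unit _ _ _ hp unz.
rewrite (divz_eq m 5) -/r exprzDr // [((m %/ 5)%Z * 5)%R]mulrC -exprz_exp.
have -> : psi u ^ 5%:Z = 1 by exact: psi5.
by rewrite exp1rz mul1r -kr.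
Qed.

Lemma sum4 (T : finType) (F1 F2 F3 F4 : T -> algC) :
  (\sum_x F1 x) * (\sum_y F2 y) * (\sum_z F3 z) * (\sum_w F4 w) =
  \sum_x \sum_y \sum_z \sum_w (F1 x * F2 y * F3 z * F4 w).
Proof.
rewrite -!mulrA mulr_suml; apply: eq_bigr => x _.
rewrite mulr_suml mulr_sumr; apply: eq_bigr => y _.
rewrite mulr_suml !mulr_sumr; apply: eq_bigr => z _.
rewrite !mulr_sumr; apply: eq_bigr => w _.
by rewrite !mulrA.
Qed.

Lemma exch4 (I : Type) (T : finType) (r : seq I) (P : pred I) (H : I -> T -> T -> T -> T -> algC) :
  \sum_(c <- r | P c) \sum_x \sum_y \sum_z \sum_w H c x y z w =
  \sum_x \sum_y \sum_z \sum_w \sum_(c <- r | P c) H c x y z w.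
Proof.
rewrite exchange_big; apply: eq_bigr => x _.
rewrite exchange_big; apply: eq_bigr => y _.
rewrite exchange_big; apply: eq_bigr => z _.
by rewrite exchange_big.
Qed.

Lemma sum_if_eq (T : finType) (w0 : T) (X : algC) :
  \sum_(w : T) (if w == w0 then X else 0) = X.
Proof. by rewrite -big_mkcond big_pred1_eq. Qed.

Lemma fact4 (p : nat) (chi f1 f2 f3 f4 : {ffun 'F_p -> algC}) (x y z w : 'F_p) :
  is_mulchar chi -> f1 0 = 0 -> f2 0 = 0 -> f3 0 = 0 -> f4 0 = 0 ->
  charmul (charinv chi) f1 x * charmul (charinv chi) f2 y * charmul chi f3 z * charmul chi f4 w
  = f1 x * f2 y * f3 z * f4 w * chi (z * w / (x * y)).
Proof.
move=> hc h1 h2 h3 h4; rewrite !ffunE.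
have [->|xnz] := eqVneq x 0; first by rewrite h1 !(mulr0, mul0r).
have [->|ynz] := eqVneq y 0; first by rewrite h2 !(mulr0, mul0r).
have [->|znz] := eqVneq z 0; first by rewrite h3 !(mulr0, mul0r).
have [->|wnz] := eqVneq w 0; first by rewrite h4 !(mulr0, mul0r).
have [c0 c1 cM] := hc.
rewrite cM cM mc_inv ?mulf_neq0 // cM invfM !exprN1.
ring.
Qed.

Lemma sum_nz (p : nat) (F : 'F_p -> algC) : \sum_z F z = F 0 + \sum_(z | z != 0) F z.
Proof. by rewrite (bigD1 0). Qed.

Lemma sum_D1 (p : nat) (F : 'F_p -> algC) (j : 'F_p) : \sum_z F z = F j + \sum_(z | z != j) F z.
Proof. by rewrite (bigD1 j). Qed.

Theorem corollary2p3 (p : nat) (zeta : algC) (psi : {ffun 'F_p -> algC})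
    (a b c : int) (s : seq {ffun 'F_p -> algC}) :
  prime p -> (p %% 5 = 1)%N -> p.-primitive_root zeta ->
  is_mulchar psi -> char_order psi 5 ->
  ~~ (5 %| a + c)%Z -> ~~ (5 %| b + c)%Z ->
  uniq s -> (forall chi, chi \in s <-> is_mulchar chi) ->
  \sum_(chi <- s)
     gauss zeta (charmul (charinv chi) (charpow psi a))
   * gauss zeta (charmul (charinv chi) (charpow psi b))
   * gauss zeta (charmul chi (charpow psi c))
   * gauss zeta (charmul chi (charpow psi (- (a + b + c))))
  = - (p%:R * (p.-1)%:R).
Proof.
move=> pp p5 zp hpsi opsi hac hbc us hs.
set cA := charpow psi a.
set cB := charpow psi b.
set cC := charpow psi c.
set cD := charpow psi (- (a + b + c)).
have hA0 : cA 0 = 0 by rewrite /cA cp0.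
have hB0 : cB 0 = 0 by rewrite /cB cp0.
have hC0 : cC 0 = 0 by rewrite /cC cp0.
have hD0 : cD 0 = 0 by rewrite /cD cp0.
have hAM x y : cA (x * y) = cA x * cA y by rewrite /cA cpM.
have hBM x y : cB (x * y) = cB x * cB y by rewrite /cB cpM.
have hCM x y : cC (x * y) = cC x * cC y by rewrite /cC cpM.
have hDM x y : cD (x * y) = cD x * cD y by rewrite /cD cpM.
have hABCD z : z != 0 -> cA z * cB z * cC z * cD z = 1.
  move=> znz; rewrite /cA /cB /cC /cD !cpE //.
  have pu := psi_unit _ _ _ hpsi znz.
  by rewrite -!exprzDr // addrN expr0z.
pose N : algC := (p.-1)%:R.
pose th (x : 'F_p) : algC := zeta ^+ x.
pose M (x y z w : 'F_p) : algC := cA x * cB y * cC z * cD w * (th x * th y * th z * th w).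
pose K (x y z w : 'F_p) : algC := if z * w == x * y then N else 0.
pose Ef (x : 'F_p) := cA x * cD x.
pose Ff (x : 'F_p) := cB x * cD x.
have hE1 : Ef (-1) = 1.
  have m1nz : (-1 : 'F_p) != 0 by rewrite oppr_eq0 oner_eq0.
  by rewrite /Ef /cA /cD !cpE // psim1 // !exp1rz mulr1.
have hF1 : Ff (-1) = 1.
  have m1nz : (-1 : 'F_p) != 0 by rewrite oppr_eq0 oner_eq0.
  by rewrite /Ff /cB /cD !cpE // psim1 // !exp1rz mulr1.
have hE0 : \sum_x Ef x = 0.
  have nd : ~~ (5 %| - (b + c))%Z by rewrite rpredN.
  have [u unz hu] := psi_nontriv _ _ _ hpsi opsi nd.
  apply: (mult_sum0 _ _ u) => //; first by move=> x y; rewrite /Ef hAM hDM; ring.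
  rewrite /Ef /cA /cD !cpE // -exprzDr ?psi_unit //.
  by have -> : a + - (a + b + c) = - (b + c) by ring.
have hF0 : \sum_x Ff x = 0.
  have nd : ~~ (5 %| - (a + c))%Z by rewrite rpredN.
  have [u unz hu] := psi_nontriv _ _ _ hpsi opsi nd.
  apply: (mult_sum0 _ _ u) => //; first by move=> x y; rewrite /Ff hBM hDM; ring.
  rewrite /Ff /cB /cD !cpE // -exprzDr ?psi_unit //.
  by have -> : b + - (a + b + c) = - (a + c) by ring.
have E1 : \sum_(chi <- s)
     gauss zeta (charmul (charinv chi) cA)
   * gauss zeta (charmul (charinv chi) cB)
   * gauss zeta (charmul chi cC)
   * gauss zeta (charmul chi cD)
   = \sum_x \sum_y \sum_z \sum_w M x y z w * K x y z w.
  rewrite big_seq (eq_bigr (fun chi : {ffun 'F_p -> algC} => \sum_x \sum_y \sum_z \sum_w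
       M x y z w * chi (z * w / (x * y)))); last first.
    move=> chi /hs hc; rewrite /gauss sum4.
    apply: eq_bigr => x _; apply: eq_bigr => y _; apply: eq_bigr => z _; apply: eq_bigr => w _.
    rewrite /M /th.
    transitivity (charmul (charinv chi) cA x * charmul (charinv chi) cB y
      * charmul chi cC z * charmul chi cD w * (zeta ^+ x * zeta ^+ y * zeta ^+ z * zeta ^+ w));
      first ring.
    rewrite (fact4 _ _ _ _ _ _ x y z w hc hA0 hB0 hC0 hD0); ring.
  rewrite (exch4 _ _ s (fun c => c \in s) (fun (c : {ffun 'F_p -> algC}) x y z w => M x y z w * c (z * w / (x * y)))); apply: eq_bigr => x _; apply: eq_bigr => y _; apply: eq_bigr => z _.
  apply: eq_bigr => w _.
  rewrite -mulr_sumr -big_seq /K /M.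
  have [->|xnz] := eqVneq x 0; first by rewrite hA0 !(mul0r, mulr0).
  have [->|ynz] := eqVneq y 0; first by rewrite hB0 !(mul0r, mulr0).
  have [->|znz] := eqVneq z 0; first by rewrite hC0 !(mul0r, mulr0).
  have [->|wnz] := eqVneq w 0; first by rewrite hD0 !(mul0r, mulr0).
  rewrite char_sum //; last by rewrite !mulf_neq0 ?invr_neq0 ?mulf_neq0.
  rewrite (size_chars _ _ pp us hs).
  have -> : (z * w / (x * y) == 1) = (z * w == x * y); last by [].
  apply/eqP/eqP => [h|->]; last by rewrite divff ?mulf_neq0.
  by rewrite -(divfK (mulf_neq0 xnz ynz) (z * w)) h mul1r.
have E2 x y z : \sum_w M x y z w * K x y z w
    = if z == 0 then 0 else M x y z (x * y / z) * N.
  have [->|znz] := eqVneq z 0.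
    by apply: big1 => w _; rewrite /M hC0 !(mul0r, mulr0).
  rewrite -(sum_if_eq _ (x * y / z) (M x y z (x * y / z) * N)).
  apply: eq_bigr => w _; rewrite /K.
  have -> : (z * w == x * y) = (w == x * y / z).
    apply/eqP/eqP => [h|->]; first by rewrite -h [z * w]mulrC mulfK.
    by rewrite mulrC divfK.
  by case: eqP => [->|_]; rewrite ?mulr0.
have E3 : \sum_x \sum_y \sum_z \sum_w M x y z w * K x y z w
    = \sum_z \sum_x \sum_y (if z == 0 then 0 else M x y z (x * y / z) * N).
  transitivity (\sum_x \sum_z \sum_y (if z == 0 then 0 else M x y z (x * y / z) * N)).
    apply: eq_bigr => x _; rewrite exchange_big; apply: eq_bigr => z _.
    by apply: eq_bigr => y _; rewrite E2.
  by rewrite exchange_big.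
have E4 z : z != 0 -> \sum_x \sum_y M x y z (x * y / z) * N
    = \sum_s' \sum_t Ef s' * Ff t * th (z * ((1 + s') * (1 + t))) * N.
  move=> znz.
  rewrite [LHS](reindex_inj (mulfI znz)); apply: eq_bigr => s' _.
  rewrite [LHS](reindex_inj (mulfI znz)); apply: eq_bigr => t _.
  have -> : z * s' * (z * t) / z = z * (s' * t) by field.
  have -> : z * ((1 + s') * (1 + t)) = z * s' + z * t + z + z * (s' * t) by ring.
  rewrite /M /th !(theta_add _ _ _ _ pp zp) /Ef /Ff !hAM !hBM !hDM.
  set T := (zeta ^+ _ * _ * _ * _).
  transitivity ((cA z * cB z * cC z * cD z) * (cA s' * cD s' * (cB t * cD t) * T * N)).
    ring.
  by rewrite hABCD // mul1r.
have E5 : \sum_z \sum_x \sum_y (if z == 0 then 0 else M x y z (x * y / z) * N)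
   = \sum_(z | z != 0) \sum_s' \sum_t Ef s' * Ff t * th (z * ((1 + s') * (1 + t))) * N.
  rewrite [RHS]big_mkcond /=; apply: eq_bigr => z _.
  have [->|znz] := eqVneq z 0.
    by rewrite /= big1 // => x _; rewrite big1.
  by rewrite /= -E4.
have E6 : \sum_(z | z != 0) \sum_s' \sum_t Ef s' * Ff t * th (z * ((1 + s') * (1 + t))) * N
   = \sum_s' \sum_t N * (p%:R * (if (1 + s') * (1 + t) == 0 then Ef s' * Ff t else 0)
                        - Ef s' * Ff t).
  rewrite exchange_big; apply: eq_bigr => s' _; rewrite exchange_big; apply: eq_bigr => t _.
  set k := (1 + s') * (1 + t).
  transitivity (Ef s' * Ff t * N * \sum_(z | z != 0) th (z * k)).
    by rewrite mulr_sumr; apply: eq_bigr => z _; ring.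
  have hs' : \sum_(z | z != 0) th (z * k) = (if k == 0 then p%:R else 0) - 1.
    rewrite -(theta_sum _ zeta k pp zp) [X in _ = X - 1]sum_nz mul0r expr0.
    by rewrite [1 + _]addrC addrK.
  by rewrite hs'; case: (k == 0); ring.
have E7 : \sum_s' \sum_t Ef s' * Ff t = 0.
  by apply: big1 => s' _; rewrite -mulr_sumr hF0 mulr0.
have E8 : \sum_s' \sum_t (if (1 + s') * (1 + t) == 0 then Ef s' * Ff t else 0) = -1.
  transitivity (\sum_s' (if s' == -1 then 0 else Ef s' * Ff (-1))).
    apply: eq_bigr => s' _.
    case: (eqVneq s' (-1)) => [->|sn].
      under eq_bigr do rewrite addrN mul0r eqxx.
      by rewrite -mulr_sumr hF0 mulr0.
    rewrite /= -(sum_if_eq _ (-1 : 'F_p) (Ef s' * Ff (-1))); apply: eq_bigr => t _.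
    rewrite mulf_eq0 [1 + s']addrC addr_eq0 (negPf sn) /= [1 + t]addrC addr_eq0.
    by case: eqP => [->|].
  rewrite (sum_D1 _ _ (-1)) eqxx add0r.
  rewrite (eq_bigr (fun s' => Ef s' * Ff (-1))) => [|s' /negPf ->] //.
  rewrite -mulr_suml hF1 mulr1.
  have := hE0; rewrite (sum_D1 _ _ (-1)) hE1 => h.
  by apply/eqP; rewrite -addr_eq0 addrC h.
rewrite E1 E3 E5 E6.
have -> : \sum_s' \sum_t N * (p%:R * (if (1 + s') * (1 + t) == 0 then Ef s' * Ff t else 0)
                        - Ef s' * Ff t)
   = N * p%:R * \sum_s' \sum_t (if (1 + s') * (1 + t) == 0 then Ef s' * Ff t else 0)
     - N * \sum_s' \sum_t Ef s' * Ff t.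
  rewrite !mulr_sumr -sumrB; apply: eq_bigr => s' _.
  by rewrite !mulr_sumr -sumrB; apply: eq_bigr => t _; ring.
rewrite E7 E8 /N; ring.
Qed.
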